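(* Let $G$ be a finite connected simple graph with shortest-path distance $d$. The following are equivalent: (1) $G$ is ptolemaic, i.e. $d(x,y)d(z,w)+d(y,z)d(x,w)\ge d(x,z)d(y,w)$ for all vertices $x,y,z,w$; (2) for all vertices $x,y,z,w$ with $y\neq z$, $d(x,y)+d(y,z)=d(x,z)$ and $d(y,z)+d(z,w)=d(y,w)$, one has $d(x,y)+d(y,z)+d(z,w)=d(x,w)$; (3) for all vertices $x,y,z,w$ with $d(x,y)+d(y,z)=d(x,z)$, $d(y,z)+d(z,w)=d(y,w)$ and $d(x,y)=d(y,z)=1$, one has $d(x,y)+d(y,z)+d(z,w)=d(x,w)$; (4) $G$ is chordal (has no induced cycle of length at least $4$) and distance-hereditary (every induced path is a shortest path). *)

(* Defs.v *)
(* Finite simple graphs as a symmetric irreflexive relation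
   e : rel T on a finType T. *)
From mathcomp Require Import all_boot.
Set Implicit Arguments. Unset Strict Implicit. Unset Printing Implicit Defensive.

Section Graph.
Variables (T : finType) (e : rel T).

Definition walkb (n : nat) (x y : T) : bool :=
  [exists p : n.-tuple T, path e x p && (last x p == y)].

(* shortest-path distance: the least n with a walk of length n from x to y
   (searched among 0 .. #|T|-1, which suffices in a connected graph) *)
Definition gdist (x y : T) : nat := find (fun n => walkb n x y) (iota 0 #|T|).

Definition gconnected : Prop := forall x y : T, connect e x y.

Definition ptolemaic : Prop :=
  forall x y z w : T,
    gdist x y * gdist z w + gdist y z * gdist x w >= gdist x z * gdist y w.

Definition induced_cycle (k : nat) (v : 'I_k -> T) : Prop :=
  injective v /\
  forall i j : 'I_k,
    e (v i) (v j) = ((val j == (val i).+1 %% k) || (val i == (val j).+1 %% k)).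

Definition chordal : Prop :=
  forall (k : nat) (v : 'I_k -> T), 4 <= k -> ~ induced_cycle v.

Definition induced_path (k : nat) (v : 'I_k.+1 -> T) : Prop :=
  injective v /\
  forall i j : 'I_k.+1,
    e (v i) (v j) = ((val j == (val i).+1) || (val i == (val j).+1)).

Definition distance_hereditary : Prop :=
  forall (k : nat) (v : 'I_k.+1 -> T),
    induced_path v -> gdist (v ord0) (v ord_max) = k.

End Graph.

(* Main.v *)
Require Import Defs.
From mathcomp Require Import all_boot.
From mathcomp Require Import zify.
From Stdlib Require Import Lia.
Set Implicit Arguments. Unset Strict Implicit. Unset Printing Implicit Defensive.

Section G.
Variables (T : finType) (e : rel T).
Hypotheses (e_sym : symmetric e) (e_irr : irreflexive e) (e_conn : gconnected e).
Local Notation d := (gdist e).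
Local Notation wk := (walkb e).

Lemma walkb0 x y : wk 0 x y = (x == y).
Proof.
apply/existsP/eqP => [[p]|->]; last by exists [tuple]; rewrite /= eqxx.
by case: p => [[|]] //= _ /eqP.
Qed.

Lemma walkbS n x y : wk n.+1 x y = [exists u, e x u && wk n u y].
Proof.
apply/existsP/existsP => [[p]|[u /andP[exu /existsP[p /andP[pp lp]]]]].
  case/tupleP: p => u p /= /andP[/andP[exu pp] lp].
  by exists u; rewrite exu; apply/existsP; exists p; rewrite pp.
by exists [tuple of u :: p]; rewrite /= exu pp.
Qed.

Lemma walkbSP n x y : reflect (exists u, e x u /\ wk n u y) (wk n.+1 x y).
Proof.
rewrite walkbS; apply: (iffP existsP) => [[u /andP[]]|[u []]]; first by exists u.
by move=> a b; exists u; rewrite a b.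
Qed.

Lemma walk_cat m n x y z : wk m x y -> wk n y z -> wk (m + n) x z.
Proof.
elim: m x => [|m IH] x.
  by rewrite walkb0 => /eqP->.
by move=> /walkbSP[u [xu uy]] yz; rewrite addSn; apply/walkbSP; exists u; split => //; apply: IH uy yz.
Qed.

Lemma walk_snoc n x y z : wk n x y -> e y z -> wk n.+1 x z.
Proof.
move=> h yz; rewrite -addn1; apply: walk_cat h _.
by apply/walkbSP; exists z; rewrite walkb0 eqxx.
Qed.

Lemma walk_rev n x y : wk n x y -> wk n y x.
Proof.
elim: n x => [|n IH] x; first by rewrite !walkb0 eq_sym.
move=> /walkbSP[u [xu uy]]; apply: walk_snoc (IH _ uy) _.
by rewrite e_sym.
Qed.

Lemma walk_exists x y : exists2 n, n < #|T| & wk n x y.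
Proof.
case/connectP: (e_conn x y) => p pp ->.
case: (shortenP pp) => p' pp' up' _.
exists (size p').
  by have := max_card (mem (x :: p')); rewrite (card_uniqP up').
apply/existsP; exists (in_tuple p'); by rewrite pp' eqxx.
Qed.

Lemma has_walk x y : has (fun n => wk n x y) (iota 0 #|T|).
Proof.
case: (walk_exists x y) => n lt h; apply/hasP; exists n => //.
by rewrite mem_iota.
Qed.

Lemma gdist_lt x y : d x y < #|T|.
Proof. by have := has_walk x y; rewrite has_find size_iota. Qed.

Lemma gdist_walk x y : wk (d x y) x y.
Proof.
have := nth_find 0 (has_walk x y).
by rewrite nth_iota ?gdist_lt.
Qed.

Lemma gdist_min n x y : wk n x y -> d x y <= n.
Proof.
move=> h; case: (leqP #|T| n) => [le|lt].
  by apply: ltnW; apply: leq_trans (gdist_lt x y) le.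
rewrite leqNgt; apply/negP => lt2.
have := before_find 0 lt2.
by rewrite nth_iota ?add0n ?h // (ltn_trans lt2 (gdist_lt x y)).
Qed.

Lemma d_refl x : d x x = 0.
Proof. by apply/eqP; rewrite -leqn0; apply: gdist_min; rewrite walkb0. Qed.

Lemma d_eq0 x y : d x y = 0 -> x = y.
Proof. by move=> h; have := gdist_walk x y; rewrite h walkb0 => /eqP. Qed.

Lemma d_sym x y : d x y = d y x.
Proof.
by apply/eqP; rewrite eqn_leq !gdist_min // walk_rev // gdist_walk.
Qed.

Lemma d_tri x y z : d x z <= d x y + d y z.
Proof. by apply: gdist_min; apply: walk_cat; apply: gdist_walk. Qed.

Lemma d_edge x y : e x y -> d x y = 1.
Proof.
move=> h; apply/eqP; rewrite eqn_leq gdist_min; last first.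
  by apply/walkbSP; exists y; rewrite walkb0.
rewrite lt0n; apply/eqP => /d_eq0 xy; by rewrite xy e_irr in h.
Qed.

Lemma d_one x y : d x y = 1 -> e x y.
Proof.
move=> h; have := gdist_walk x y; rewrite h => /walkbSP[u [xu]].
by rewrite walkb0 => /eqP<-.
Qed.

Lemma d_step n x y : d x y = n.+1 -> exists u, e x u /\ d u y = n.
Proof.
move=> h; have := gdist_walk x y; rewrite h => /walkbSP[u [xu uy]].
exists u; split => //; apply/eqP; rewrite eqn_leq gdist_min //=.
have := d_tri x u y; rewrite (d_edge xu) h; lia.
Qed.

Definition P2prop := forall x y z w : T, y != z ->
         d x y + d y z = d x z -> d y z + d z w = d y w ->
         d x y + d y z + d z w = d x w.
Definition P3prop := forall x y z w : T,
         d x y + d y z = d x z -> d y z + d z w = d y w ->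
         d x y = 1 -> d y z = 1 ->
         d x y + d y z + d z w = d x w.

Let dsym := d_sym.
Let dtri := d_tri.

Lemma P3_step1 (H3 : P3prop) k : forall x y z w, d x y = k -> d y z = 1 ->
  d x y + d y z = d x z -> d y z + d z w = d y w -> d x y + d y z + d z w = d x w.
Proof.
elim: k => [|k IH] x y z w hk h1 h2 h3.
  by move: (d_eq0 hk) => xy; subst x; rewrite d_refl add0n.
have [y' [yy' dy'x]] : exists u, e y u /\ d u x = k by apply: d_step; rewrite dsym.
have ey' : d y' y = 1 by rewrite dsym; apply: d_edge.
have d2 : d y' z = 2.
  have := dtri x y' z; have := dtri y' y z; rewrite (dsym x y'); lia.
have hw := H3 y' y z w ltac:(lia) ltac:(lia) ey' h1.
have := IH x y' y w; rewrite (dsym x y') dy'x ey' => /(_ erefl erefl).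
move=> /(_ ltac:(lia) ltac:(lia)); lia.
Qed.

Lemma P3_P2 : P3prop -> P2prop.
Proof.
move=> H3 x y z w; move: {2}(d y z) (erefl (d y z)) => m.
elim: m x y z w => [|m IH] x y z w hm yz h2 h3.
  by move: (d_eq0 hm) yz => ->; rewrite eqxx.
case: m IH hm => [|m] IH hm; first by apply: (P3_step1 H3 erefl).
have [y1 [yy1 dy1z]] := d_step hm.
have e1 : d y y1 = 1 := d_edge yy1.
have a1 : d x y1 = d x y + 1.
  have := dtri x y y1; have := dtri x y1 z; lia.
have a2 : d y1 w = m.+1 + d z w.
  have := dtri y1 z w; have := dtri y y1 w; lia.
have yz1 : y1 != z by apply/negP => /eqP ee; subst; rewrite d_refl in dy1z.
have := IH x y1 z w dy1z yz1; rewrite a1 dy1z a2; lia.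
Qed.

Lemma glue (H2 : P2prop) A m B s t : e m s -> e m t -> d s t = 2 ->
  d A m = d A s + 1 -> d m B = 1 + d t B -> d A B = d A m + d m B.
Proof.
move=> ms mt st h1 h2.
have dms : d s m = 1 by rewrite dsym; apply: d_edge.
have dmt : d m t = 1 by apply: d_edge.
have mt' : m != t by apply/negP => /eqP ee; subst; rewrite e_irr in mt.
have := H2 s m t B mt'; rewrite dms dmt st => /(_ erefl); rewrite h2 => /(_ erefl) hsB.
have sm' : s != m by apply/negP => /eqP ee; subst; rewrite e_irr in ms.
have := H2 A s m B sm'; rewrite dms -h1 => /(_ erefl); rewrite -hsB -h2.
move=> /(_ ltac:(lia)); lia.
Qed.

Lemma L_adj a b c f p q : c = f + a + b -> q = a + f -> p = a + b -> p*q <= a*c + b*f.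
Proof. move=> -> -> ->; rewrite !mulnDl !mulnDr; lia. Qed.
Lemma L_opp a2 b2 a b c f p q q2 : a = a2.+1 -> b = b2.+1 -> c = a -> f = b -> q = a + b ->
  p.+1 = a + b -> q = q2.+1 -> p*q2 <= a2*c + b*f -> p*q2 <= a*c + b2*f -> a*c + b*f < p*q -> False.
Proof.
move=> -> -> -> -> -> hp hq; have -> : p = a2 + b2 + 1 by lia.
have -> : q2 = a2 + b2 + 1 by lia.
move=> h1 h2 h3.
have : a2 * b2 = 0 by nia.
move/eqP; rewrite muln_eq0 => /orP[]/eqP H0; rewrite H0 in h1 h2 h3; nia.
Qed.
Lemma L_near a2 b2 a b c f p q : a = a2.+1 -> b = b2.+1 -> c = a -> f = b ->
  p = a2 + b2 + 1 -> q = a2 + b2 + 1 ->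
  (a2 + b2) * q <= a2*c + b*f -> (a2 + b2) * q <= a*c + b*b2 -> a*c + b*f < p*q ->
  a2 = 1 /\ b2 = 1.
Proof.
move=> -> -> -> -> -> -> h1 h2 h3.
have e1 : 2 * (a2 * b2) <= b2 + 1 by nia.
have e2 : 2 * (a2 * b2) <= a2 + 1 by nia.
have e3 : 1 < 2 * (a2 * b2) by nia.
have a1 : 0 < a2 by case: a2 e3 {e1 e2 h1 h2 h3} => //; rewrite mul0n.
have b1 : 0 < b2 by case: b2 e3 {e1 e2 h1 h2 h3} => //; rewrite muln0.
have : b2 <= a2 * b2 by rewrite leq_pmull.
have : a2 <= a2 * b2 by rewrite leq_pmulr.
lia.
Qed.
Lemma LA2 a b c f p q : a*c + b*f < p*q -> f = a + b + c -> p = a + b -> q = b + c -> False.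
Proof. move=> hp h0 h1 h2; have := @L_adj b c f a q p h0 ltac:(lia) h2.
  rewrite (mulnC q p) (mulnC c a) addnC; lia. Qed.
Lemma LA3 a b c f p q : a*c + b*f < p*q -> a = b + c + f -> q = b + c -> p = c + f -> False.
Proof. move=> hp h0 h1 h2; have := @L_adj c f a b p q h0 ltac:(lia) h2.
  rewrite (mulnC c a) (mulnC f b); lia. Qed.
Lemma LA4 a b c f p q : a*c + b*f < p*q -> b = c + f + a -> p = c + f -> q = f + a -> False.
Proof. move=> hp h0 h1 h2; have := @L_adj f a b c q p h0 ltac:(lia) h2.
  rewrite (mulnC q p) (mulnC f b) addnC; lia. Qed.
Lemma LA1 a b c f p q : a*c + b*f < p*q -> c = f + a + b -> q = a + f -> p = a + b -> False.
Proof. move=> hp h0 h1 h2; have := @L_adj a b c f p q h0 h1 h2; lia. Qed.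
Lemma arith_main a b c f p q :
  a*c + b*f < p*q ->
  (q = a + f \/ exists a1 f1 p1, [/\ a = a1.+1, f = f1.+1, p = p1.+1 & q.+1 = a + f] /\ (p1*q <= a1*c + b*f /\ p1*q <= a*c + b*f1)) ->
  (p = a + b \/ exists a1 b1 q1, [/\ a = a1.+1, b = b1.+1, q = q1.+1 & p.+1 = a + b] /\ (p*q1 <= a1*c + b*f /\ p*q1 <= a*c + b1*f)) ->
  (q = b + c \/ exists b1 c1 p1, [/\ b = b1.+1, c = c1.+1, p = p1.+1 & q.+1 = b + c] /\ (p1*q <= a*c + b1*f /\ p1*q <= a*c1 + b*f)) ->
  (p = c + f \/ exists c1 f1 q1, [/\ c = c1.+1, f = f1.+1, q = q1.+1 & p.+1 = c + f] /\ (p*q1 <= a*c + b*f1 /\ p*q1 <= a*c1 + b*f)) ->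
  (q = a + f -> p = a + b -> c = f + a + b) ->
  (p = a + b -> q = b + c -> f = a + b + c) ->
  (q = b + c -> p = c + f -> a = b + c + f) ->
  (p = c + f -> q = f + a -> b = c + f + a) ->
  [/\ a = 2, b = 2, c = 2, f = 2 & p = 3 /\ q = 3].
Proof.
move=> hp FX FY FZ FW G1 G2 G3 G4.
move: FX FY FZ FW.
have A1 : q = a + f -> p = a + b -> False.
  by move=> h1 h2; exact: (@LA1 a b c f p q hp (G1 h1 h2) h1 h2).
have A2 : p = a + b -> q = b + c -> False.
  by move=> h1 h2; exact: (@LA2 a b c f p q hp (G2 h1 h2) h1 h2).
have A3 : q = b + c -> p = c + f -> False.
  by move=> h1 h2; exact: (@LA3 a b c f p q hp (G3 h1 h2) h1 h2).
have A4 : p = c + f -> q = f + a -> False.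
  by move=> h1 h2; exact: (@LA4 a b c f p q hp (G4 h1 h2) h1 h2).
move=> FX FY FZ FW.
clear G1 G2 G3 G4.
case: FX => [ex|[a1 [f1 [p1 [[ha hf hpp nx] [x1 x2]]]]]];
case: FY => [ey|[a2 [b2 [q2 [[ha2 hb2 hq2 ny] [y1 y2]]]]]];
case: FZ => [ez|[b3 [c3 [p3 [[hb3 hc3 hp3 nz] [z1 z2]]]]]];
case: FW => [ew|[c4 [f4 [q4 [[hc4 hf4 hq4 nw] [w1 w2]]]]]];
try (by case: (A1 ex ey)); try (by case: (A2 ey ez)); try (by case: (A3 ez ew));
try (by case: (A4 ew ltac:(lia))); try (exfalso; lia).
have ac : a = c by lia.
have bf : b = f by lia.
have hb' : b = f1.+1 by lia.
have ep : p1 = a1 + f1 by lia.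
rewrite ep in x1 x2.
have := @L_near a1 f1 a b c f p q ha hb' (esym ac) (esym bf) ltac:(lia) ltac:(lia).
move=> /(_ x1 x2 hp) [h1 h2]; split; lia.
Qed.

Lemma AH1 a b c f p q : b = a + p -> q <= a + f -> p <= c + f -> p * q <= a * c + b * f.
Proof. move=> -> h1 h2. nia. Qed.
Lemma AH2 a b c f p q : c = f + p -> q <= a + f -> p <= a + b -> p * q <= a * c + b * f.
Proof. move=> -> h1 h2. nia. Qed.
Lemma AT2 a b c f p q a' f' p' : a = a'+1 -> f = f'+1 -> p <= p'+1 -> q <= b + c -> p' * q <= a' * c + b * f' -> p * q <= a * c + b * f.
Proof. move=> -> -> h1 h2 h3. nia. Qed.
Lemma AT3 a b c f p q a' : a = a'+1 -> p * q <= a' * c + b * f -> p * q <= a * c + b * f.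
Proof. move=> -> h. nia. Qed.

Section Ptol.
Hypothesis H2 : P2prop.

Definition ptol x y z w := d x z * d y w <= d x y * d z w + d y z * d x w.
Definition Sm x y z w := d x y + d y z + d z w + d x w + d x z + d y w.

Lemma vertex x y z w :
  (forall x' y' z' w', Sm x' y' z' w' < Sm x y z w -> ptol x' y' z' w') ->
  ~~ ptol x y z w ->
  d y w = d x y + d x w \/
  (d y w + 1 = d x y + d x w /\ exists t u, [/\ e x t, e x u & e t u] /\
     [/\ d t y + 1 = d x y, d t w = d x w & d t z + 1 = d x z] /\
     [/\ d u w + 1 = d x w, d u y = d x y & d u z + 1 = d x z]).
Proof.
move=> IH; rewrite /ptol -ltnNge => hp.
have tq : d y w <= d x y + d x w by rewrite (dsym x y); apply: dtri.
have tpa : d x z <= d x y + d y z by apply: dtri.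
have tpc : d x z <= d x w + d z w by rewrite (dsym z w); apply: dtri.
have tqc : d y w <= d y z + d z w by apply: dtri.
have ha : 0 < d x y.
  case: (posnP (d x y)) => // /d_eq0 xy; subst x.
  by move: hp; rewrite d_refl; lia.
have hf : 0 < d x w.
  case: (posnP (d x w)) => // /d_eq0 xw; subst x.
  by move: hp; rewrite d_refl (dsym y w) (dsym z w); lia.
have hpz : 0 < d x z by case: (posnP (d x z)) hp => // ->; lia.
have [t0 [xt0 dt0]] : exists k, e x k /\ d k y = (d x y).-1 by apply: d_step; lia.
have [u0 [xu0 du0]] : exists k, e x k /\ d k w = (d x w).-1 by apply: d_step; lia.
have [s [xs ds]] : exists k, e x k /\ d k z = (d x z).-1 by apply: d_step; lia.
have d1 : forall k, e x k -> d x k = 1 /\ d k x = 1.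
  by move=> k xk; split; [apply: d_edge | rewrite dsym; apply: d_edge].
have noT2 : forall k, e x k -> d k y + 1 = d x y -> d k w + 1 = d x w -> False.
  move=> k xk hy hw; have [h1 h2] := d1 k xk.
  have hz : d x z <= d k z + 1 by have := dtri x k z; lia.
  have hz2 : d k z <= d x z + 1 by have := dtri k x z; lia.
  have := IH k y z w; rewrite /Sm /ptol => /(_ ltac:(lia)) hk.
  have := @AT2 (d x y) (d y z) (d z w) (d x w) (d x z) (d y w) (d k y) (d k w) (d k z).
  move=> /(_ ltac:(lia) ltac:(lia) hz tqc hk); lia.
have LAy : forall k, e x k -> d k y + 1 = d x y -> d k z <= d x z.
  move=> k xk hy; have [h1 h2] := d1 k xk; have [h3 h4] := d1 s xs.
  have : d k s <= 2 by have := dtri k x s; lia.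
  rewrite leq_eqVlt ltnS => /orP[/eqP h | h].
    have := @glue H2 y x z k s xk xs h; rewrite (dsym y x) (dsym y k) => /(_ ltac:(lia) ltac:(lia)).
    move=> hb; have := @AH1 (d x y) (d y z) (d z w) (d x w) (d x z) (d y w).
    by move=> /(_ ltac:(lia) tq ltac:(lia)); lia.
  by have := dtri k s z; lia.
have LAw : forall k, e x k -> d k w + 1 = d x w -> d k z <= d x z.
  move=> k xk hy; have [h1 h2] := d1 k xk; have [h3 h4] := d1 s xs.
  have : d k s <= 2 by have := dtri k x s; lia.
  rewrite leq_eqVlt ltnS => /orP[/eqP h | h].
    have := @glue H2 w x z k s xk xs h; rewrite (dsym w x) (dsym w k) (dsym w z) => /(_ ltac:(lia) ltac:(lia)).
    move=> hb; have := @AH2 (d x y) (d y z) (d z w) (d x w) (d x z) (d y w).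
    by move=> /(_ ltac:(lia) tq ltac:(lia)); lia.
  by have := dtri k s z; lia.
have Tzy : forall k, e x k -> d k y + 1 = d x y -> d k w = d x w -> d k z + 1 = d x z.
  move=> k xk hy hw; have [h1 h2] := d1 k xk; have lz := LAy k xk hy.
  have tz := dtri x k z; case: (d k z =P d x z) => hz; last lia.
  have := IH k y z w; rewrite /Sm /ptol => /(_ ltac:(lia)) hk.
  have := @AT3 (d x y) (d y z) (d z w) (d x w) (d x z) (d y w) (d k y).
  by move=> /(_ ltac:(lia)); rewrite -hz -hw => /(_ hk); lia.
have Tzw : forall k, e x k -> d k w + 1 = d x w -> d k y = d x y -> d k z + 1 = d x z.
  move=> k xk hw hy; have [h1 h2] := d1 k xk; have lz := LAw k xk hw.
  have tz := dtri x k z; case: (d k z =P d x z) => hz; last lia.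
  have := IH k y z w; rewrite /Sm /ptol => /(_ ltac:(lia)) hk.
  have := @AT3 (d x w) (d z w) (d y z) (d x y) (d x z) (d y w) (d k w).
  move=> /(_ ltac:(lia)); rewrite -hz -hy => /(_ ltac:(lia)); lia.
have [h1 h2] := d1 t0 xt0; have [h3 h4] := d1 u0 xu0.
have : d t0 u0 <= 2 by have := dtri t0 x u0; lia.
rewrite leq_eqVlt ltnS leq_eqVlt ltnS leqn0 => /orP[/eqP h|/orP[/eqP h|/eqP h]].
- left; have := @glue H2 y x w t0 u0 xt0 xu0 h; rewrite (dsym y x) (dsym y t0).
  by move=> /(_ ltac:(lia) ltac:(lia)); lia.
- have etu : e t0 u0 by apply: d_one.
  have tw : d t0 w = d x w.
    have := dtri t0 u0 w; have := dtri x t0 w.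
    case: (d t0 w + 1 =P d x w) => [/(noT2 t0 xt0 ltac:(lia))|] //; lia.
  have uy : d u0 y = d x y.
    have := dtri u0 t0 y; have := dtri x u0 y; rewrite (dsym u0 t0).
    case: (d u0 y + 1 =P d x y) => [hh|]; last lia.
    by case: (noT2 u0 xu0 hh ltac:(lia)).
  right; split; last first.
    exists t0, u0; split; first by split.
    split; split; try lia.
      by apply: Tzy => //; lia.
    by apply: Tzw => //; lia.
  case: (posnP (d t0 y)) => [/d_eq0 ty|pos].
    by subst t0; move: dt0; rewrite d_refl; lia.
  have [t1 [tt1 dt1]] : exists k, e t0 k /\ d k y = (d t0 y).-1 by apply: d_step; lia.
  have et1 : d t0 t1 = 1 := d_edge tt1.
  have t1u : d t1 u0 = 2.
    have := dtri t1 t0 u0; have := dtri u0 t1 y; have := dsym t0 t1; have := dsym u0 t1; lia.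
  have := @glue H2 y t0 w t1 u0 tt1 etu t1u; rewrite (dsym y t0) (dsym y t1).
  by move=> /(_ ltac:(lia) ltac:(lia)); lia.
- by move/d_eq0: h => ee; subst u0; case: (noT2 t0 xt0 ltac:(lia) ltac:(lia)).
Qed.


Lemma flip1 m n r s t u : m * n <= r * s + t * u -> n * m <= u * t + r * s.
Proof. by rewrite (mulnC m) (mulnC t) addnC. Qed.
Lemma flip2 m n r s t u : m * n <= r * s + t * u -> m * n <= s * r + u * t.
Proof. by rewrite (mulnC r) (mulnC t). Qed.
Lemma flip3 m n r s t u : m * n <= r * s + t * u -> n * m <= t * u + s * r.
Proof. by rewrite (mulnC m) (mulnC r) addnC. Qed.

Lemma ptol_rot x y z w : ptol y z w x = ptol x y z w.
Proof.
rewrite /ptol (dsym z x) (dsym w x) (dsym y x) (mulnC (d y w)) (mulnC (d z w)).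
by rewrite addnC.
Qed.

Lemma Sm_rot x y z w : Sm y z w x = Sm x y z w.
Proof. rewrite /Sm (dsym z x) (dsym w x) (dsym y x); lia. Qed.

Lemma np_xy x y z w : ~~ ptol x y z w -> x != y.
Proof.
apply: contra => /eqP xy; subst x.
by rewrite /ptol d_refl mul0n add0n.
Qed.

Lemma near_facts x y z w :
  (forall x' y' z' w', Sm x' y' z' w' < Sm x y z w -> ptol x' y' z' w') ->
  (exists t u, [/\ e x t, e x u & e t u] /\
     [/\ d t y + 1 = d x y, d t w = d x w & d t z + 1 = d x z] /\
     [/\ d u w + 1 = d x w, d u y = d x y & d u z + 1 = d x z]) ->
  exists a1 f1 p1, [/\ d x y = a1.+1, d x w = f1.+1 & d x z = p1.+1] /\
    (p1 * d y w <= a1 * d z w + d y z * d x w /\ p1 * d y w <= d x y * d z w + d y z * f1).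
Proof.
move=> IH [t [u [[xt xu tu] [[t1 t2 t3] [u1 u2 u3]]]]].
exists (d t y), (d u w), (d t z); split; first by split; lia.
split.
  have := IH t y z w; rewrite /Sm /ptol => /(_ ltac:(lia)).
  by move=> h; rewrite t2 in h.
have ez : d u z = d t z by lia.
have := IH u y z w; rewrite /Sm /ptol => /(_ ltac:(lia)).
by move=> h; rewrite ez u2 in h.
Qed.

Lemma special x y z w tx ux T0 U0 :
 (forall x' y' z' w', Sm x' y' z' w' < 14 -> ptol x' y' z' w') ->
 d x y = 2 -> d x w = 2 -> e x tx -> e x ux -> e tx ux -> d tx y = 1 -> d tx w = 2 ->
 d ux w = 1 -> d ux y = 2 -> e z T0 -> e z U0 -> e T0 U0 -> d T0 w = 1 -> d T0 y = 2 ->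
 d T0 x = 2 -> d U0 y = 1 -> d U0 w = 2 -> d U0 x = 2 -> False.
Proof.
move=> IH ea ef xtx xux txux h_txy h_txw h_uxw h_uxy zT zU TU h_Tw h_Ty h_Tx h_Uy h_Uw h_Ux.
have h_xtx : d x tx = 1 := d_edge xtx.
have h_xux : d x ux = 1 := d_edge xux.
have h_txux : d tx ux = 1 := d_edge txux.
have h_TU : d T0 U0 = 1 := d_edge TU.
have h_UT : d U0 T0 = 1 by rewrite dsym.
have h_wT : d w T0 = 1 by rewrite dsym.
have h_xT : d x T0 = 2 by rewrite dsym.
have h_yU : d y U0 = 1 by rewrite dsym.
have h_xU : d x U0 = 2 by rewrite dsym.
have r1 : d tx U0 <= 1.
  have := IH x tx y U0; rewrite /Sm /ptol h_xtx h_txy h_yU h_xU ea.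
  by move=> /(_ ltac:(have := dtri tx y U0; lia)); lia.
have r2 : d ux T0 <= 1.
  have := IH x ux w T0; rewrite /Sm /ptol h_xux h_uxw h_wT h_xT ef.
  by move=> /(_ ltac:(have := dtri ux w T0; lia)); lia.
have g1 : 0 < d tx T0.
  by rewrite lt0n; apply/eqP => /d_eq0 ee; subst tx; rewrite h_Tw in h_txw.
have h1 : 0 < d U0 ux.
  by rewrite lt0n; apply/eqP => /d_eq0 ee; subst U0; rewrite h_Uy in h_uxy.
have gh : d tx T0 * d U0 ux <= 2.
  have q1 := dtri tx U0 T0; have q2 := dtri U0 T0 ux; rewrite (dsym T0 ux) in q2.
  have := IH tx U0 T0 ux; rewrite /Sm /ptol h_UT h_txux (dsym T0 ux).
  move=> /(_ ltac:(lia)) hh.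
  have : d tx U0 * d ux T0 <= 1 * 1 by apply: leq_mul.
  lia.
have [g|h] : d tx T0 = 1 \/ d U0 ux = 1.
  case: (d tx T0 =P 1) => [|ng]; first by left.
  right; apply/eqP; rewrite eqn_leq h1 andbT; apply/negP => hh.
  have : 2 * 2 <= d tx T0 * d U0 ux by apply: leq_mul; lia.
  lia.
- have := IH x tx T0 w; rewrite /Sm /ptol h_xtx g h_Tw ef h_xT h_txw.
  by move=> /(_ erefl).
- have := IH x ux U0 y; rewrite /Sm /ptol h_xux (dsym ux U0) h h_Uy ea h_xU h_uxy.
  by move=> /(_ erefl).
Qed.

Definition FXf x y z w := d y w = d x y + d x w \/ exists a1 f1 p1, [/\ d x y = a1.+1, d x w = f1.+1, d x z = p1.+1 & (d y w).+1 = d x y + d x w] /\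
    (p1 * d y w <= a1 * d z w + d y z * d x w /\ p1 * d y w <= d x y * d z w + d y z * f1).

Lemma FX_of x y z w :
  (forall x' y' z' w', Sm x' y' z' w' < Sm x y z w -> ptol x' y' z' w') ->
  d y w = d x y + d x w \/
  (d y w + 1 = d x y + d x w /\ exists t u, [/\ e x t, e x u & e t u] /\
     [/\ d t y + 1 = d x y, d t w = d x w & d t z + 1 = d x z] /\
     [/\ d u w + 1 = d x w, d u y = d x y & d u z + 1 = d x z]) -> FXf x y z w.
Proof.
move=> IH [|[hn /(near_facts IH) [a1 [f1 [p1 [[h1 h2 h3] [h4 h5]]]]]]]; first by left.
by right; exists a1, f1, p1; split; [split => //; lia| split].
Qed.

Lemma FY_of x y z w : FXf y z w x -> d x z = d x y + d y z \/ exists a1 b1 q1, [/\ d x y = a1.+1, d y z = b1.+1, d y w = q1.+1 & (d x z).+1 = d x y + d y z] /\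
    (d x z * q1 <= a1 * d z w + d y z * d x w /\ d x z * q1 <= d x y * d z w + b1 * d x w).
Proof.
rewrite /FXf (dsym z x) (dsym y x) (dsym w x).
case=> [->|[a1 [f1 [p1 [[h1 h2 h3 hn] [h4 h5]]]]]]; first by left; rewrite addnC.
right; exists f1, a1, p1; split; first by split => //; lia.
by split; [apply: flip1 h5 | apply: flip1 h4].
Qed.

Lemma FZ_of x y z w : FXf z w x y -> d y w = d y z + d z w \/ exists b1 c1 p1, [/\ d y z = b1.+1, d z w = c1.+1, d x z = p1.+1 & (d y w).+1 = d y z + d z w] /\
    (p1 * d y w <= d x y * d z w + b1 * d x w /\ p1 * d y w <= d x y * c1 + d y z * d x w).
Proof.
rewrite /FXf (dsym w y) (dsym z y) (dsym w x) (dsym z x).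
case=> [->|[a1 [f1 [p1 [[h1 h2 h3 hn] [h4 h5]]]]]]; first by left; rewrite addnC.
right; exists f1, a1, p1; split; first by split => //; lia.
by split; [apply: flip2 h5 | apply: flip2 h4].
Qed.

Lemma FW_of x y z w : FXf w x y z -> d x z = d z w + d x w \/ exists c1 f1 q1, [/\ d z w = c1.+1, d x w = f1.+1, d y w = q1.+1 & (d x z).+1 = d z w + d x w] /\
    (d x z * q1 <= d x y * d z w + d y z * f1 /\ d x z * q1 <= d x y * c1 + d y z * d x w).
Proof.
rewrite /FXf (dsym w x) (dsym w z) (dsym w y).
case=> [->|[a1 [f1 [p1 [[h1 h2 h3 hn] [h4 h5]]]]]]; first by left; rewrite addnC.
right; exists f1, a1, p1; split; first by split => //; lia.
by split; [apply: flip3 h4 | apply: flip3 h5].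
Qed.

Lemma G_facts x y z w : x != y -> y != z -> z != w -> w != x ->
  [/\ (d y w = d x y + d x w -> d x z = d x y + d y z -> d z w = d x w + d x y + d y z),
      (d x z = d x y + d y z -> d y w = d y z + d z w -> d x w = d x y + d y z + d z w),
      (d y w = d y z + d z w -> d x z = d z w + d x w -> d x y = d y z + d z w + d x w) &
      (d x z = d z w + d x w -> d y w = d x w + d x y -> d y z = d z w + d x w + d x y)].
Proof.
move=> xy yz zw wx; split.
- move=> h1 h2; have := @H2 w x y z xy; rewrite !(dsym w) => /(_ ltac:(lia) ltac:(lia)); lia.
- move=> h1 h2; have := @H2 x y z w yz => /(_ ltac:(lia) ltac:(lia)); lia.
- move=> h1 h2; have := @H2 y z w x zw; rewrite (dsym w x) (dsym z x) (dsym y x).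
  move=> /(_ ltac:(lia) ltac:(lia)); lia.
- move=> h1 h2; have := @H2 z w x y wx; rewrite (dsym w x) (dsym z x) (dsym z y) (dsym w y).
  move=> /(_ ltac:(lia) ltac:(lia)); lia.
Qed.

Lemma ptol_lt n : forall x y z w, Sm x y z w < n -> ptol x y z w.
Proof.
elim: n => // n IHn x y z w hS.
have IH : forall x' y' z' w', Sm x' y' z' w' < Sm x y z w -> ptol x' y' z' w'.
  by move=> ? ? ? ? h; apply: IHn; apply: leq_trans h _.
clear IHn hS.
case: (boolP (ptol x y z w)) => // np; exfalso.
have np2 : ~~ ptol y z w x by rewrite ptol_rot.
have np3 : ~~ ptol z w x y by rewrite ptol_rot.
have np4 : ~~ ptol w x y z by rewrite ptol_rot.
have IH2 : forall x' y' z' w', Sm x' y' z' w' < Sm y z w x -> ptol x' y' z' w' by rewrite Sm_rot.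
have IH3 : forall x' y' z' w', Sm x' y' z' w' < Sm z w x y -> ptol x' y' z' w' by rewrite 2!Sm_rot.
have IH4 : forall x' y' z' w', Sm x' y' z' w' < Sm w x y z -> ptol x' y' z' w' by rewrite 3!Sm_rot.
have hp : d x y * d z w + d y z * d x w < d x z * d y w by rewrite ltnNge.
have [G1 G2 G3 G4] := G_facts (np_xy np) (np_xy np2) (np_xy np3) (np_xy np4).
have Vx := vertex IH np.
have Vz := vertex IH3 np3.
have FX := FX_of IH Vx.
have FY := FY_of (FX_of IH2 (vertex IH2 np2)).
have FZ := FZ_of (FX_of IH3 Vz).
have FW := FW_of (FX_of IH4 (vertex IH4 np4)).
have := @arith_main (d x y) (d y z) (d z w) (d x w) (d x z) (d y w) hp.
move=> /(_ FX FY FZ FW G1 G2 G3 G4) [ea eb ec ef [ep eq]].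
clear FX FY FZ FW G1 G2 G3 G4 IH2 IH4 np2 np4.
have S14 : Sm x y z w = 14 by rewrite /Sm ea eb ec ef ep eq.
rewrite S14 in IH.
case: Vx => [|[_ [tx [ux [[xtx xux txux] [[t1 t2 t3] [u1 u2 u3]]]]]]].
  by rewrite ea ef eq.
case: Vz => [|[_ [T0 [U0 [[zT zU TU] [[T1 T2 T3] [U1 U2 U3]]]]]]].
  by rewrite (dsym w y) (dsym z y) ec eb eq.
rewrite ea in t1 u2; rewrite ef in t2 u1.
rewrite ec in T1 U2; rewrite (dsym z y) eb in T2 U1; rewrite (dsym z x) ep in T3 U3.
apply: (@special x y z w tx ux T0 U0 IH ea ef xtx xux txux) => //; lia.
Qed.

Theorem ptol_all : ptolemaic e.
Proof. move=> x y z w; exact: (@ptol_lt (Sm x y z w).+1 x y z w (ltnSn _)). Qed.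

End Ptol.

Section LGsec.
Hypothesis H3 : P3prop.

Lemma LG n : forall v : nat -> T, (forall i, i < n -> e (v i) (v i.+1)) ->
  (forall i, i.+2 <= n -> (v i != v i.+2) && ~~ e (v i) (v i.+2)) -> d (v 0) (v n) = n.
Proof.
elim/ltn_ind: n => n IH v he hn.
case: n IH he hn => [|[|m]] IH he hn.
- exact: d_refl.
- exact: d_edge (he 0 erefl).
have h1 := IH m.+1 (ltnSn _) (fun i => v i.+1).
have h2 := IH m (ltnW (ltnSn _)) (fun i => v i.+2).
rewrite /= in h1 h2.
have e1 : d (v 1) (v m.+2) = m.+1.
  apply: h1 => i hi; [exact: he | exact: hn].
have e2 : d (v 2) (v m.+2) = m.
  apply: h2 => i hi; [exact: he | exact: hn].
have d01 : d (v 0) (v 1) = 1 by apply: d_edge; exact: he.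
have d12 : d (v 1) (v 2) = 1 by apply: d_edge; exact: he.
have d02 : d (v 0) (v 2) = 2.
  have /andP[ne ne2] := hn 0 erefl.
  have := dtri (v 0) (v 1) (v 2); rewrite d01 d12 => le2.
  case E: (d (v 0) (v 2)) => [|[|[|n]]] //.
  - by move/d_eq0: E => h; rewrite h eqxx in ne.
  - by move/d_one: E => h; rewrite h in ne2.
  - by rewrite E in le2.
have := @H3 (v 0) (v 1) (v 2) (v m.+2); rewrite d01 d12 d02 e1 e2.
by move=> /(_ erefl erefl erefl erefl).
Qed.

Lemma LG_chordal : chordal e.
Proof.
move=> k v hk [vinj hv].
case: k v hk vinj hv => [|k] // v hk vinj hv.
pose w i := v (inord (if i == k.+1 then 0 else i)).
have := @LG k.+1 w.
have w0 : w 0 = w k.+1 by rewrite /w eqxx.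
rewrite w0 d_refl.
have wv : forall i, i <= k -> w i = v (inord i).
  by move=> i hi; rewrite /w; have -> : (i == k.+1) = false by apply/eqP; lia.
suff [A B] : (forall i, i < k.+1 -> e (w i) (w i.+1)) /\
  (forall i, i.+2 <= k.+1 -> (w i != w i.+2) && ~~ e (w i) (w i.+2)) by move=> /(_ A B).
split.
- move=> i hi; rewrite wv; last lia.
  case: (i =P k) => [->|nik].
    rewrite -w0 /w hv /= !inordK //.
    by rewrite modnn.
  rewrite wv; last lia.
  rewrite hv /= !inordK; try lia.
  by rewrite modn_small ?eqxx //; lia.
- move=> i hi; rewrite wv; last lia.
  case: (i.+2 =P k.+1) => [h2|h2].
    rewrite h2 -w0 /w /=; apply/andP; split.
      apply/negP => /eqP /vinj /(congr1 val) /=.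
      rewrite !inordK; lia.
    rewrite hv /= !inordK; try lia.
    rewrite (modn_small (_ : i.+1 < k.+1)); last lia.
    by rewrite (_ : k.+1 = i.+2) // modn_small; lia.
  rewrite wv; last lia.
  apply/andP; split.
    apply/negP => /eqP /vinj /(congr1 val) /=.
    rewrite !inordK; lia.
  rewrite hv /= !inordK; try lia.
  rewrite (modn_small (_ : i.+1 < k.+1)); last lia.
  case: (i.+3 =P k.+1) => [h3|h3].
    by rewrite h3 modnn; lia.
  by rewrite modn_small; lia.
Qed.

Lemma LG_dh : distance_hereditary e.
Proof.
move=> k v [vinj hv].
pose w i := v (inord i).
have := @LG k w.
have -> : w 0 = v ord0 by rewrite /w; congr v; apply: val_inj; rewrite /= inordK.
have -> : w k = v ord_max by rewrite /w; congr v; apply: val_inj; rewrite /= inordK.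
apply.
- move=> i hi; rewrite /w hv /= !inordK //; last lia.
  by rewrite eqxx.
- move=> i hi; apply/andP; split.
  + apply/negP => /eqP /vinj /(congr1 val) /=.
    by rewrite !inordK; lia.
  + rewrite /w hv /= !inordK; lia.
Qed.

End LGsec.

Lemma e_d u v : e u v = (d u v == 1).
Proof. by apply/idP/eqP => [/d_edge|/d_one]. Qed.

Lemma geod n : forall z w, d z w = n -> exists g : nat -> T,
  [/\ g 0 = z, g n = w, (forall i, i < n -> e (g i) (g i.+1)) & (forall i, i <= n -> d (g i) w = n - i)].
Proof.
elim: n => [|n IH] z w h.
  exists (fun _ => z); split => //; try exact: d_eq0;
  by move=> i; rewrite leqn0 => /eqP ->; rewrite h.
have [u [zu uw]] := d_step h.
have [g [g0 gn ge gd]] := IH u w uw.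
exists (fun i => if i is j.+1 then g j else z); split => //.
- by case=> [|i] hi /=; [rewrite g0 | apply: ge].
- by case=> [|i] hi /=; [rewrite h subn0 | rewrite gd // subSS].
Qed.

Lemma geod_d n (w : T) (g : nat -> T) : g n = w -> (forall i, i < n -> e (g i) (g i.+1)) ->
  (forall i, i <= n -> d (g i) w = n - i) ->
  forall i j, i <= j <= n -> d (g i) (g j) = j - i.
Proof.
move=> gn ge gd i j /andP[ij jn].
apply/eqP; rewrite eqn_leq; apply/andP; split.
  move: ij jn; rewrite leq_eqVlt => /orP[/eqP->|]; first by rewrite d_refl.
  elim: j => // j IHj; rewrite ltnS leq_eqVlt => /orP[/eqP->|ij] jn.
    by rewrite subSnn (d_edge (ge _ jn)).
  have := dtri (g i) (g j) (g j.+1); rewrite (d_edge (ge j jn)) => h.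
  have := IHj ij (ltnW jn); lia.
have := dtri (g i) (g j) w; rewrite !gd //; [lia | exact: leq_trans ij jn].
Qed.

Lemma CD_P3 : chordal e -> distance_hereditary e -> P3prop.
Proof.
move=> hc hdh x y z w h1 h2 hxy hyz.
set n := d z w.
have [g [g0 gn ge gd]] := geod (erefl n).
have gg := geod_d gn ge gd.
have dxz : d x z = 2 by lia.
have dyw : d y w = n.+1 by lia.
have dyg : forall i, i <= n -> d y (g i) = i.+1.
  move=> i hi.
  have a1 := dtri y z (g i).
  have a2 := dtri y (g i) w.
  have a3 : d z (g i) = i by rewrite -g0 gg ?subn0 //= hi.
  have a4 := gd i hi.
  lia.
have exy : e x y by apply: d_one.
suff : ~ (exists2 i, i <= n & e x (g i)).
  move=> nadj.
  pose V i := if i is i'.+1 then (if i' is j.+1 then g j else y) else x.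
  pose v (i : 'I_(n.+3)) := V i.
  have dyV : forall i, i <= n.+2 -> d y (V i) = if i is i'.+1 then (if i' is j.+1 then j.+1 else 0) else 1.
    case=> [|[|j]] hj /=; [by rewrite dsym | by rewrite d_refl | by apply: dyg].
  suff ip : induced_path e v.
    by have hd := hdh _ v ip; rewrite /v /= gn in hd; lia.
  split.
    move=> i j /= hij; apply: val_inj.
    have hy := congr1 (d y) hij; have hx := congr1 (d x) hij.
    rewrite (dyV _ (leq_ord i)) (dyV _ (leq_ord j)) in hy.
    move: hx hy; rewrite /v /V.
    case: i {hij} => [[|[|[|a]]] ia]; case: j => [[|[|[|b]]] jb] //=;
      rewrite ?d_refl ?g0 ?dxz; lia.
  move=> i j; rewrite !e_d /v /V.
  case: i => [[|[|a]] ia]; case: j => [[|[|b]] jb] /=.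
  - by rewrite d_refl.
  - by rewrite hxy.
  - apply/negbTE/negP => /eqP h; apply: nadj; exists b; [lia | by rewrite e_d h].
  - by rewrite dsym hxy.
  - by rewrite d_refl.
  - rewrite dyg; lia.
  - rewrite dsym; apply/negbTE/negP => /eqP h; apply: nadj; exists a; [lia | by rewrite e_d h].
  - rewrite dsym dyg; lia.
  - case: (leqP a b) => ab; first by rewrite gg ?ab /=; lia.
    by rewrite dsym gg ?(ltnW ab) /=; lia.
case=> i hi exg.
case: i hi exg => [|[|i]] hi exg.
- by move: exg; rewrite g0 e_d dxz.
-
  pose v (k : 'I_4) := nth x [:: x; y; z; g 1] k.
  apply: (hc 4 v erefl); split.
    move=> i j hij; apply: val_inj.
    have := congr1 (d y) hij; have := congr1 (d x) hij.
    have dxg : d x (g 1) = 1 by apply: d_edge.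
    have dyg1 : d y (g 1) = 2 by apply: dyg.
    case: i {hij} => [[|[|[|[|?]]]] ?] //; case: j => [[|[|[|[|?]]]] ?] //=;
      rewrite ?d_refl ?dxg ?dyg1 ?hyz ?hxy ?dxz ?(dsym y x) ?hxy //.
  have dxg : d x (g 1) = 1 by apply: d_edge.
  have dyg1 : d y (g 1) = 2 by apply: dyg.
  have dzg : d z (g 1) = 1 by rewrite -g0 gg //=; lia.
  move=> i j; rewrite !e_d.
  case: i => [[|[|[|[|?]]]] ?] //; case: j => [[|[|[|[|?]]]] ?] //=;
    rewrite ?d_refl ?dxg ?dyg1 ?hyz ?hxy ?dxz ?dzg //;
    rewrite ?(dsym y x) ?(dsym z y) ?(dsym z x) ?(dsym (g 1) x) ?(dsym (g 1) y) ?(dsym (g 1) z);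
    rewrite ?d_refl ?dxg ?dyg1 ?hyz ?hxy ?dxz ?dzg //.
- have := dtri y x (g i.+2); rewrite dyg // (dsym y x) hxy (d_edge exg); lia.
Qed.

Lemma ptol_P2 : ptolemaic e -> P2prop.
Proof.
move=> hp x y z w yz h1 h2.
have := hp x y z w; rewrite -h1 -h2 => hh.
have bp : 0 < d y z by rewrite lt0n; apply/eqP => /d_eq0 ee; rewrite ee eqxx in yz.
have tr := dtri x y w; have tr2 := dtri y z w.
have : d y z * (d x y + d y z + d z w) <= d y z * d x w by nia.
rewrite leq_pmul2l // => h; lia.
Qed.
End G.

Theorem propositionB1 (T : finType) (e : rel T)
  (e_sym : symmetric e) (e_irr : irreflexive e) (e_conn : gconnected e) :
  let d := gdist e in
  [<-> ptolemaic e;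
       forall x y z w : T, y != z ->
         d x y + d y z = d x z -> d y z + d z w = d y w ->
         d x y + d y z + d z w = d x w;
       forall x y z w : T,
         d x y + d y z = d x z -> d y z + d z w = d y w ->
         d x y = 1 -> d y z = 1 ->
         d x y + d y z + d z w = d x w;
       chordal e /\ distance_hereditary e].
Proof.
move=> d; rewrite {}/d.
tfae.
- exact: (ptol_P2 e_conn).
- move=> H x y z w h1 h2 h3 h4; apply: H => //.
  apply/negP => /eqP yz; subst z.
  by rewrite (d_refl e_conn) in h4.
- move=> H3; split; [exact: (LG_chordal e_irr e_conn H3) | exact: (LG_dh e_irr e_conn H3)].
- move=> [hc hdh]; apply: (ptol_all e_sym e_irr e_conn).
  apply: (P3_P2 e_sym e_irr e_conn).
  exact: (CD_P3 e_sym e_irr e_conn hc hdh).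
Qed.
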